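(* Let $\beta\in(0,1/2)$, $N=2^n$, $\delta_N=2^{-N^\beta}$. Let $(V,X,Z)$ be random variables with $V\in\{0,1\}$ and $X,Z$ taking values in finite alphabets $\mathcal X,\mathcal Z$, and let $P=P_{V^NX^NZ^N}$ be the distribution of $N$ i.i.d. copies of $(V,X,Z)$. Put $T^N=V^NG_N$ and $$\mathcal H_{V|Z}=\{i\in[N]:\ Z(T_i\mid T^{i-1},Z^N)\ge 1-\delta_N\},$$ the Bhattacharyya parameters being computed under $P$. Let $Q=Q_{V^NX^NZ^N}$ be any distribution on $\{0,1\}^N\times\mathcal X^N\times\mathcal Z^N$ with $\|P-Q\|_1\le N2^{-N^\beta}$, and under $Q$ again set $T^N=V^NG_N$. Let $\mathcal I\subseteq\mathcal H_{V|Z}$ and $\mathcal A\subseteq\mathcal I$, and write $T[\mathcal S]=(T_i)_{i\in\mathcal S}$. Then, with mutual information computed under $Q$, $$I\big(T[\mathcal I\setminus\mathcal A];\,T[\mathcal A],Z^N\big)=O\big(N^3 2^{-N^\beta}\big),$$ where the implied constant depends only on $|\mathcal Z|$ (and the bound holds for all sufficiently large $N$).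
   Context: $G_N=B_NF^{\otimes n}$ is Arıkan's polarizing matrix over $\mathbb F_2$: $F=\begin{pmatrix}1&0\\1&1\end{pmatrix}$, $\otimes$ is the Kronecker product and $B_N$ is the bit-reversal permutation matrix; $V^NG_N$ is computed over $\mathbb F_2$. For a binary random variable $A$ and a discrete random variable $B$, the Bhattacharyya parameter is $Z(A\mid B)=2\sum_b P_B(b)\sqrt{P_{A|B}(0|b)P_{A|B}(1|b)}$. $T^{i-1}=(T_1,\dots,T_{i-1})$, $[N]=\{1,\dots,N\}$, $\|\cdot\|_1$ is the $\ell_1$ distance between distributions, and logarithms are base 2. *)

(* Defs.v *)
From Stdlib Require Import Reals.
From HB Require Import structures.
From mathcomp Require Import all_boot all_order all_algebra.

Set Implicit Arguments.
Unset Strict Implicit.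
Unset Printing Implicit Defensive.

Section Kron.
Local Open Scope ring_scope.
Variable R : pzRingType.

Definition mx_at m n (A : 'M[R]_(m, n)) (i j : nat) : R :=
  match @insub _ (fun k => (k < m)%N) ('I_m) i,
        @insub _ (fun k => (k < n)%N) ('I_n) j with
  | Some i', Some j' => A i' j'
  | _, _ => 0
  end.

(* Kronecker product: (A (x) B)_{(i1,i2),(j1,j2)} = A_{i1 j1} B_{i2 j2},
   with row index i = i1 * m2 + i2 and column index j = j1 * n2 + j2. *)
Definition kronmx m1 n1 m2 n2 (A : 'M[R]_(m1, n1)) (B : 'M[R]_(m2, n2))
  : 'M[R]_(m1 * m2, n1 * n2) :=
  \matrix_(i, j) (mx_at A (i %/ m2) (j %/ n2) * mx_at B (i %% m2) (j %% n2)).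
End Kron.

Local Open Scope ring_scope.

Definition Fmx : 'M['F_2]_2 := \matrix_(i, j) (if (j <= i)%N then 1 else 0).

Fixpoint Fpow (n : nat) : 'M['F_2]_(2 ^ n) :=
  match n with
  | 0 => 1%:M
  | n'.+1 => castmx (esym (expnS 2 n'), esym (expnS 2 n')) (kronmx Fmx (Fpow n'))
  end.

Definition bitrev (n k : nat) : nat :=
  (\sum_(l < n) ((k %/ 2 ^ l) %% 2) * 2 ^ (n.-1 - l))%N.

Definition Bmx (n : nat) : 'M['F_2]_(2 ^ n) :=
  \matrix_(i, j) (if val j == bitrev n i then 1 else 0).

Definition Gmx (n : nat) : 'M['F_2]_(2 ^ n) := Bmx n *m Fpow n.

Close Scope ring_scope.

Local Open Scope R_scope.

Definition rsum (T : finType) (f : T -> R) : R := \big[Rplus/R0]_(t : T) f t.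

Definition is_dist (T : finType) (mu : T -> R) : Prop :=
  (forall t, 0 <= mu t) /\ rsum mu = 1.

Definition l1dist (T : finType) (mu nu : T -> R) : R :=
  rsum (fun t => Rabs (mu t - nu t)).

Definition pmarg (O T : finType) (mu : O -> R) (A : O -> T) (a : T) : R :=
  \big[Rplus/R0]_(w : O | A w == a) mu w.

Definition log2 (x : R) : R := ln x / ln 2.

Definition bhatt (O BT : finType) (mu : O -> R) (A : O -> 'F_2) (B : O -> BT) : R :=
  2 * \big[Rplus/R0]_(b : BT)
        (pmarg mu B b *
         sqrt ((pmarg mu (fun w => (A w, B w)) (0%R, b) / pmarg mu B b) *
               (pmarg mu (fun w => (A w, B w)) (1%R, b) / pmarg mu B b))).

Definition minfo (O TA TB : finType) (mu : O -> R) (A : O -> TA) (B : O -> TB) : R :=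
  \big[Rplus/R0]_(ab : TA * TB)
    (let pab := pmarg mu (fun w => (A w, B w)) ab in
     if Rlt_dec 0 pab
     then pab * log2 (pab / (pmarg mu A ab.1 * pmarg mu B ab.2))
     else 0).

(* sample space of (V^N, X^N, Z^N), N = 2^n *)
Definition Omega (n : nat) (X Z : finType) : finType :=
  ('rV['F_2]_(2 ^ n) * 'rV[X]_(2 ^ n) * 'rV[Z]_(2 ^ n))%type.

Definition iid (n : nat) (X Z : finType) (p : 'F_2 * X * Z -> R)
  (w : Omega n X Z) : R :=
  \big[Rmult/R1]_(k < 2 ^ n) p (w.1.1 ord0 k, w.1.2 ord0 k, w.2 ord0 k).

Definition Tvec (n : nat) (X Z : finType) (w : Omega n X Z) : 'rV['F_2]_(2 ^ n) :=
  mulmx w.1.1 (Gmx n).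

(* T[S] = (T_i)_{i in S}, encoded as the vector with entries outside S zeroed *)
Definition restr (N : nat) (t : 'rV['F_2]_N) (S : {set 'I_N}) : {ffun 'I_N -> 'F_2} :=
  [ffun k => if k \in S then t ord0 k else 0%R].

(* T^{i-1} = (T_1..T_{i-1}) for the 1-based index i+1, i.e. entries k < i *)
Definition prefix (N : nat) (t : 'rV['F_2]_N) (i : 'I_N) : {ffun 'I_N -> 'F_2} :=
  [ffun k : 'I_N => if (k < i)%N then t ord0 k else 0%R].

Definition NN (n : nat) : R := INR (2 ^ n).
Definition delta (n : nat) (beta : R) : R := Rpower 2 (- Rpower (NN n) beta).

Definition Hset (n : nat) (X Z : finType) (p : 'F_2 * X * Z -> R) (beta : R)
  : {set 'I_(2 ^ n)} :=
  [set i | if Rle_dec (1 - delta n beta)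
                (bhatt (iid p) (fun w : Omega n X Z => Tvec w ord0 i)
                               (fun w => (prefix (Tvec w) i, w.2)))
           then true else false].

(* Main.v *)
Require Import Defs.
From Stdlib Require Import Reals Lra.
From HB Require Import structures.
From mathcomp Require Import all_boot all_order all_algebra.
Local Open Scope R_scope.

Set Implicit Arguments.
Unset Strict Implicit.
Unset Printing Implicit Defensive.

Lemma Rplus_assoc' : associative Rplus.
Proof. by move=> x y z; rewrite Rplus_assoc. Qed.
HB.instance Definition _ := Monoid.isComLaw.Build R R0 Rplus Rplus_assoc' Rplus_comm Rplus_0_l.

Lemma ln_le_sub1 x : 0 < x -> ln x <= x - 1.
Proof. move=> hx; have := exp_ineq1_le (ln x); rewrite exp_ln //; lra. Qed.

Lemma ln_le' x y : 0 < x -> x <= y -> ln x <= ln y.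
Proof. move=> hx [h|->]; [by apply/Rlt_le/ln_increasing|lra]. Qed.

Definition phi (x : R) := - (x * ln x).

Section Big.
Variable I : finType.

Lemma bigR_mulr (P : pred I) (F : I -> R) c :
  \big[Rplus/R0]_(i | P i) (F i * c) = (\big[Rplus/R0]_(i | P i) F i) * c.
Proof. elim/big_rec2: _ => [|i y1 y2 _ ->]; ring. Qed.

Lemma bigR_le (P : pred I) (F G : I -> R) :
  (forall i, P i -> F i <= G i) ->
  \big[Rplus/R0]_(i | P i) F i <= \big[Rplus/R0]_(i | P i) G i.
Proof. move=> h; elim/big_rec2: _ => [|i y1 y2 Pi H]; [lra|]. have := h i Pi; lra. Qed.

Lemma bigR_ge0 (P : pred I) (F : I -> R) :
  (forall i, P i -> 0 <= F i) -> 0 <= \big[Rplus/R0]_(i | P i) F i.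
Proof. move=> h; elim/big_rec: _ => [|i y Pi H]; [lra|]. have := h i Pi; lra. Qed.

Lemma bigR_add (P : pred I) (F G : I -> R) :
  \big[Rplus/R0]_(i | P i) (F i + G i) =
  \big[Rplus/R0]_(i | P i) F i + \big[Rplus/R0]_(i | P i) G i.
Proof. elim/big_rec3: _ => [|i y1 y2 y3 _ ->]; ring. Qed.

Lemma bigR_opp (P : pred I) (F : I -> R) :
  \big[Rplus/R0]_(i | P i) (- F i) = - \big[Rplus/R0]_(i | P i) F i.
Proof. elim/big_rec2: _ => [|i y1 y2 _ ->]; ring. Qed.

Lemma bigR_const (c : R) : rsum (fun _ : I => c) = INR #|I| * c.
Proof.
rewrite /rsum big_const cardE; elim: (enum I) => [|x s IH] /=; first ring.
rewrite IH; case: (size s) => [|m] /=; ring.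
Qed.

Lemma bigR_sub_le (P : pred I) (F : I -> R) :
  (forall i, 0 <= F i) -> \big[Rplus/R0]_(i | P i) F i <= rsum F.
Proof.
move=> h; rewrite /rsum [X in _ <= X](bigID P) /=.
have := bigR_ge0 (P := fun i => ~~ P i) (fun i _ => h i); lra.
Qed.
End Big.
Section Ent.
Variable O : finType.
Variable mu : O -> R.
Hypothesis hmu : forall w, 0 <= mu w.

Lemma pmarg_ge0 (T : finType) (f : O -> T) t : 0 <= pmarg mu f t.
Proof. by apply: bigR_ge0 => w _; apply: hmu. Qed.

Lemma fiber (T : finType) (f : O -> T) (F : T -> R) :
  rsum (fun w => mu w * F (f w)) = rsum (fun t => pmarg mu f t * F t).
Proof.
rewrite /rsum (partition_big f predT) //=.
apply: eq_bigr => t _; rewrite /pmarg -bigR_mulr.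
by apply: eq_bigr => w /eqP <-.
Qed.

Lemma pmarg_le (T U : finType) (f : O -> T) (g : O -> U) t u :
  (forall w, f w = t -> g w = u) -> pmarg mu f t <= pmarg mu g u.
Proof.
move=> h; rewrite /pmarg (big_mkcond (fun w => f w == t)) (big_mkcond (fun w => g w == u)).
apply: bigR_le => w _.
case: eqP => [/h ->|_]; rewrite ?eqxx; first lra.
by case: ifP => _; [apply: hmu|lra].
Qed.

Lemma pmarg_le_sum (T : finType) (f : O -> T) t : pmarg mu f t <= rsum mu.
Proof. by apply: bigR_sub_le. Qed.

Definition ent (T : finType) (f : O -> T) := rsum (fun t => phi (pmarg mu f t)).

Lemma entE (T : finType) (f : O -> T) :
  ent f = - rsum (fun w => mu w * ln (pmarg mu f (f w))).
Proof.
rewrite (fiber f (fun t => ln (pmarg mu f t))) /ent /phi /rsum.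
by rewrite -bigR_opp.
Qed.

Lemma pmarg_pos (T : finType) (f : O -> T) w : 0 < mu w -> 0 < pmarg mu f (f w).
Proof.
move=> h; apply: Rlt_le_trans h _.
rewrite /pmarg (bigD1 w) //=.
have := bigR_ge0 (P := fun i => (f i == f w) && (i != w)) (fun i _ => hmu i). lra.
Qed.

Lemma ent_eqfib (T U : finType) (f : O -> T) (g : O -> U) :
  (forall w w', (f w == f w') = (g w == g w')) -> ent f = ent g.
Proof.
move=> h; rewrite !entE /rsum; congr (- _); apply: eq_bigr => w _.
congr (_ * ln _); rewrite /pmarg; apply: eq_bigl => w'.
by rewrite -h.
Qed.

Lemma ent_coarse (T U : finType) (f : O -> T) (g : O -> U) :
  (forall w w', f w = f w' -> g w = g w') -> ent g <= ent f.
Proof.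
move=> h; rewrite !entE /rsum.
apply: Ropp_le_contravar; apply: bigR_le => w _.
case: (hmu w) => hw; last by rewrite -hw; lra.
apply: Rmult_le_compat_l; first exact: hmu.
apply: ln_le'; first exact: pmarg_pos.
apply: pmarg_le => w' e; apply: h; done.
Qed.

End Ent.
Lemma Rinv_ge0 x : 0 <= x -> 0 <= / x.
Proof. case=> h; [by apply/Rlt_le/Rinv_0_lt_compat | rewrite -h Rinv_0; lra]. Qed.

Lemma phi0 : phi 0 = 0.
Proof. rewrite /phi; ring. Qed.

Lemma gibbs_pt p c : 0 <= p -> 0 <= c -> (0 < p -> 0 < c) ->
  phi p <= - (p * ln c) + c - p.
Proof.
move=> hp hc hpc; case: hp => hp; last by rewrite -hp phi0; lra.
have hc' := hpc hp.
have h := ln_le_sub1 (Rdiv_lt_0_compat _ _ hc' hp).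
rewrite /Rdiv ln_mult ?ln_Rinv // in h; last by apply: Rinv_0_lt_compat.
have : p * (ln c + - ln p) <= p * (c * / p - 1) by apply: Rmult_le_compat_l; lra.
have -> : p * (c * / p - 1) = c - p by field; lra.
rewrite /phi; lra.
Qed.

Lemma gibbs (T : finType) (p c : T -> R) :
  (forall t, 0 <= p t) -> (forall t, 0 <= c t) -> (forall t, 0 < p t -> 0 < c t) ->
  rsum (fun t => phi (p t)) <= rsum (fun t => - (p t * ln (c t))) + rsum c - rsum p.
Proof.
move=> hp hc hpc.
have -> : rsum (fun t => - (p t * ln (c t))) + rsum c - rsum p =
          rsum (fun t => - (p t * ln (c t)) + c t - p t).
  by rewrite /rsum /Rminus !bigR_add !bigR_opp; ring.
rewrite /rsum; apply: bigR_le => t _; exact: (gibbs_pt (hp t) (hc t) (hpc t)).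
Qed.

Lemma rsum_pair (TX TY : finType) (F : TX * TY -> R) :
  rsum F = \big[Rplus/R0]_(y : TY) \big[Rplus/R0]_(x : TX) F (x, y).
Proof.
rewrite exchange_big pair_bigA /rsum; apply: eq_bigr => -[x y] //.
Qed.

Section Ent2.
Variable O : finType.
Variable mu : O -> R.
Hypothesis hmu : forall w, 0 <= mu w.

Lemma pmarg_fst (TX TZ : finType) (X : O -> TX) (G : O -> TZ) z :
  \big[Rplus/R0]_(x : TX) pmarg mu (fun w => (X w, G w)) (x, z) = pmarg mu G z.
Proof.
rewrite /pmarg [in RHS](partition_big X predT) //=.
apply: eq_bigr => x _; apply: eq_bigl => w.
by rewrite xpair_eqE andbC.
Qed.

Lemma pmarg_sum (T : finType) (f : O -> T) : rsum (pmarg mu f) = rsum mu.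
Proof.
have := fiber mu f (fun _ => 1).
have e : forall (T' : finType) (F : T' -> R), rsum (fun t => F t * 1) = rsum F.
  by move=> T' F; apply: eq_bigr => t _; ring.
by rewrite !e.
Qed.

Lemma rsum_lin (T : finType) (F G H : T -> R) :
  rsum (fun w => F w + G w - H w) = rsum F + rsum G - rsum H.
Proof. by rewrite /rsum /Rminus !bigR_add !bigR_opp. Qed.

Lemma cond_mono (TX TY TY' : finType) (X : O -> TX) (Y : O -> TY) (g : TY -> TY') :
  ent mu (fun w => (X w, Y w)) - ent mu Y <=
  ent mu (fun w => (X w, g (Y w))) - ent mu (fun w => g (Y w)).
Proof.
pose c (v : TX * TY) :=
  pmarg mu (fun w => (X w, g (Y w))) (v.1, g v.2) * pmarg mu Y v.2
  / pmarg mu (fun w => g (Y w)) (g v.2).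
have hp v : 0 < pmarg mu (fun w => (X w, Y w)) v ->
    0 < pmarg mu (fun w => (X w, g (Y w))) (v.1, g v.2) /\ 0 < pmarg mu Y v.2 /\
    0 < pmarg mu (fun w => g (Y w)) (g v.2).
  case: v => x y /= hv; split; [|split]; apply: Rlt_le_trans hv _; apply: (pmarg_le hmu) => //.
  - by move=> w [-> ->].
  - by move=> w [_ ->].
  - by move=> w [_ ->].
have hc : forall v, 0 <= c v.
  move=> v; rewrite /c /Rdiv; apply: Rmult_le_pos; first apply: Rmult_le_pos.
  1,2: exact: (pmarg_ge0 hmu).
  by apply: Rinv_ge0; exact: (pmarg_ge0 hmu).
have hpc : forall v, 0 < pmarg mu (fun w => (X w, Y w)) v -> 0 < c v.
  move=> v /hp [h1 [h2 h3]]; rewrite /c /Rdiv.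
  by apply: Rmult_lt_0_compat; [apply: Rmult_lt_0_compat|apply: Rinv_0_lt_compat].
have G := gibbs (fun v => pmarg_ge0 hmu (fun w => (X w, Y w)) v) hc hpc.
have E1 : rsum (fun v => - (pmarg mu (fun w => (X w, Y w)) v * ln (c v))) =
   ent mu (fun w => (X w, g (Y w))) + ent mu Y - ent mu (fun w => g (Y w)).
  transitivity (rsum (fun v => pmarg mu (fun w => (X w, Y w)) v *
      - (ln (pmarg mu (fun w => (X w, g (Y w))) (v.1, g v.2)) + ln (pmarg mu Y v.2)
         - ln (pmarg mu (fun w => g (Y w)) (g v.2))))).
    apply: eq_bigr => v _.
    case: (pmarg_ge0 hmu (fun w => (X w, Y w)) v) => hv; last by rewrite -hv; ring.
    have [h1 [h2 h3]] := hp v hv.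
    have h4 := Rinv_0_lt_compat _ h3.
    have h5 := Rmult_lt_0_compat _ _ h1 h2.
    rewrite /c /Rdiv !ln_mult ?ln_Rinv //; ring.
  rewrite -(fiber mu (fun w => (X w, Y w)) (fun v =>
      - (ln (pmarg mu (fun w => (X w, g (Y w))) (v.1, g v.2)) + ln (pmarg mu Y v.2)
         - ln (pmarg mu (fun w => g (Y w)) (g v.2))))).
  rewrite !entE /rsum /Rminus -!bigR_opp -!bigR_add; apply: eq_bigr => w _ /=; ring.
have E2 : rsum c <= rsum mu.
  rewrite rsum_pair -(pmarg_sum Y) /rsum; apply: bigR_le => y _.
  have -> : \big[Rplus/R0]_(x : TX) c (x, y) =
     \big[Rplus/R0]_(x : TX) (pmarg mu (fun w => (X w, g (Y w))) (x, g y)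
        * (pmarg mu Y y / pmarg mu (fun w => g (Y w)) (g y))).
    by apply: eq_bigr => x _; rewrite /c /Rdiv /=; ring.
  rewrite bigR_mulr (pmarg_fst X (fun w => g (Y w))).
  case: (pmarg_ge0 hmu (fun w => g (Y w)) (g y)) => h.
  - by rewrite /Rdiv; field_simplify; lra.
  - rewrite -h /Rdiv Rmult_0_l; exact: (pmarg_ge0 hmu).
have E3 := pmarg_sum (fun w => (X w, Y w)).
rewrite /ent in G E1 *. lra.
Qed.
End Ent2.
Lemma card_F2 : #|'F_2| = 2%N.
Proof. by rewrite card_Fp. Qed.

Section Ent3.
Variable O : finType.
Variable mu : O -> R.
Hypothesis hmu : forall w, 0 <= mu w.

Lemma ent_bin (TY : finType) (a : O -> 'F_2) (Y : O -> TY) :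
  ent mu (fun w => (a w, Y w)) <= ent mu Y + rsum mu * ln 2.
Proof.
pose c (v : 'F_2 * TY) := pmarg mu Y v.2 / 2.
have hp v : 0 < pmarg mu (fun w => (a w, Y w)) v -> 0 < pmarg mu Y v.2.
  case: v => x y /= hv; apply: Rlt_le_trans hv _; apply: (pmarg_le hmu).
  by move=> w [_ ->].
have hc : forall v, 0 <= c v.
  move=> v; rewrite /c /Rdiv; apply: Rmult_le_pos; first exact: (pmarg_ge0 hmu).
  lra.
have hpc : forall v, 0 < pmarg mu (fun w => (a w, Y w)) v -> 0 < c v.
  move=> v /hp h; rewrite /c; apply: Rdiv_lt_0_compat => //; lra.
have G := gibbs (fun v => pmarg_ge0 hmu (fun w => (a w, Y w)) v) hc hpc.
have E1 : rsum (fun v => - (pmarg mu (fun w => (a w, Y w)) v * ln (c v))) =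
   ent mu Y + rsum mu * ln 2.
  transitivity (rsum (fun v => pmarg mu (fun w => (a w, Y w)) v *
      (- ln (pmarg mu Y v.2) + ln 2))).
    apply: eq_bigr => -[x y] _ /=.
    case: (pmarg_ge0 hmu (fun w => (a w, Y w)) (x, y)) => hv; last by rewrite -hv; ring.
    have h1 : 0 < pmarg mu Y y := hp (x, y) hv.
    have h2 : 0 < / 2 by apply: Rinv_0_lt_compat; lra.
    rewrite /c /Rdiv /= ln_mult ?ln_Rinv //. all: try ring. all: try lra.
  rewrite -(fiber mu (fun w => (a w, Y w)) (fun v => - ln (pmarg mu Y v.2) + ln 2)).
  rewrite entE /rsum -bigR_mulr -bigR_opp -bigR_add; apply: eq_bigr => w _ /=; ring.
have E2 : rsum c = rsum mu.
  rewrite rsum_pair -(pmarg_sum mu Y) /rsum; apply: eq_bigr => y _.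
  have := @bigR_const 'F_2 (c (0%R, y)).
  rewrite /rsum card_F2 => e.
  rewrite (eq_bigr (fun _ => c (0%R, y))) // e /c /=; field.
have E3 := pmarg_sum mu (fun w => (a w, Y w)).
rewrite /ent in G E1 *. lra.
Qed.
End Ent3.
Lemma sumF2 (F : 'F_2 -> R) : \big[Rplus/R0]_(x : 'F_2) F x = F 0%R + F 1%R.
Proof.
rewrite (bigD1 0%R) //= (bigD1 1%R) //= big_pred0; first by rewrite Rplus_0_r.
by case=> [[|[|]]].
Qed.

Lemma per_x p q : 0 <= p -> 0 < q ->
  p * ln 2 + p * ln p - p * ln q <= 2 * p * p / q - p.
Proof.
move=> [hp|<-] hq; last by rewrite /Rdiv; lra.
have h := ln_le_sub1 (x := 2 * p / q) ltac:(apply: Rdiv_lt_0_compat; lra).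
have hq' : 0 < / q by apply: Rinv_0_lt_compat.
have hp2 : 0 < 2 * p by lra.
rewrite /Rdiv !ln_mult ?ln_Rinv in h; try lra.
have : p * (ln 2 + ln p + - ln q) <= p * (2 * p * / q - 1) by apply: Rmult_le_compat_l; lra.
have -> : p * (2 * p * / q - 1) = 2 * p * p / q - p by rewrite /Rdiv; ring.
lra.
Qed.

Lemma bin_ineq p0 p1 : 0 <= p0 -> 0 <= p1 ->
  (p0 + p1) * ln 2 - 2 * (p0 + p1)
   + 4 * ((p0 + p1) * sqrt (p0 / (p0 + p1) * (p1 / (p0 + p1))))
  <= phi p0 + phi p1 - phi (p0 + p1).
Proof.
move=> h0 h1; set q := p0 + p1.
case: (Rle_lt_or_eq_dec 0 q ltac:(rewrite /q; lra)) => hq; last first.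
  have e0 : p0 = 0 by rewrite /q in hq; lra.
  have e1 : p1 = 0 by rewrite /q in hq; lra.
  rewrite /q e0 e1 Rplus_0_r phi0; lra.
have a0 := per_x h0 hq.
have a1 := per_x h1 hq.
set s := sqrt _.
have hs : 0 <= s by apply: sqrt_pos.
have hs2 : s * s = p0 / q * (p1 / q).
  apply: sqrt_sqrt; apply: Rmult_le_pos; rewrite /Rdiv; apply: Rmult_le_pos => //; apply: Rinv_ge0; lra.
set t := q * s.
have ht2 : t * t = p0 * p1.
  rewrite /t; have -> : q * s * (q * s) = q * q * (s * s) by ring.
  rewrite hs2; field; lra.
have ht : 0 <= t by rewrite /t; apply: Rmult_le_pos; lra.
have key : 4 * t <= 3 * q - 2 * (p0 * p0 + p1 * p1) / q.
  have -> : 3 * q - 2 * (p0 * p0 + p1 * p1) / q = (q * q + 4 * (p0 * p1)) / q.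
    rewrite /q; field; rewrite -/q; lra.
  apply: (Rmult_le_reg_r q) => //.
  have -> : (q * q + 4 * (p0 * p1)) / q * q = q * q + 4 * (p0 * p1) by field; lra.
  rewrite -ht2; have h := pow2_ge_0 (q - 2 * t); nra.
have E : phi p0 + phi p1 - phi q = (- (p0 * ln p0) + p0 * ln q) + (- (p1 * ln p1) + p1 * ln q).
  rewrite /phi /q; ring.
rewrite E.
have e2 : 2 * p0 * p0 / q + 2 * p1 * p1 / q = 2 * (p0 * p0 + p1 * p1) / q.
  by rewrite /Rdiv; ring.
have : q * ln 2 = p0 * ln 2 + p1 * ln 2 by rewrite /q; ring.
move=> hl; clear E; have hqd : q = p0 + p1 by []. clearbody t; clearbody s; clearbody q.
move: a0 a1 key e2 hl; set X := 2 * (p0 * p0 + p1 * p1) / q; set A0 := 2 * p0 * p0 / q; set A1 := 2 * p1 * p1 / q; lra.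
Qed.
Section Ent4.
Variable O : finType.
Variable mu : O -> R.
Hypothesis hmu : forall w, 0 <= mu w.

Lemma bhatt_ent (BT : finType) (a : O -> 'F_2) (B : O -> BT) :
  rsum mu * ln 2 - 2 * (rsum mu - bhatt mu a B) <=
  ent mu (fun w => (a w, B w)) - ent mu B.
Proof.
pose p0 b := pmarg mu (fun w => (a w, B w)) (0%R, b).
pose p1 b := pmarg mu (fun w => (a w, B w)) (1%R, b).
have hB b : pmarg mu B b = p0 b + p1 b.
  by rewrite -(pmarg_fst mu a B b) sumF2.
pose pb b := p0 b + p1 b.
pose sq b := sqrt (p0 b / pb b * (p1 b / pb b)).
have E1 : ent mu (fun w => (a w, B w)) = \big[Rplus/R0]_b (phi (p0 b) + phi (p1 b)).
  by rewrite /ent rsum_pair; apply: eq_bigr => b _; rewrite sumF2.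
have E2 : ent mu B = \big[Rplus/R0]_b phi (pb b).
  by rewrite /ent /rsum; apply: eq_bigr => b _; rewrite hB.
have E3 : rsum mu = \big[Rplus/R0]_b pb b.
  by rewrite -(pmarg_sum mu B) /rsum; apply: eq_bigr => b _; rewrite hB.
have E4 : bhatt mu a B = 2 * \big[Rplus/R0]_b (pb b * sq b).
  by rewrite /bhatt; congr (2 * _); apply: eq_bigr => b _; rewrite hB.
have L : \big[Rplus/R0]_b (pb b * ln 2 + - (2 * pb b) + 4 * (pb b * sq b))
   <= \big[Rplus/R0]_b (phi (p0 b) + phi (p1 b) + - phi (pb b)).
  apply: bigR_le => b _; apply: bin_ineq; exact: (pmarg_ge0 hmu).
have e : forall (F : BT -> R) c, \big[Rplus/R0]_b (c * F b) = c * \big[Rplus/R0]_b F b.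
  by move=> F c; rewrite Rmult_comm -bigR_mulr; apply: eq_bigr => *; ring.
have e' : forall (F : BT -> R) c, \big[Rplus/R0]_b (F b * c) = (\big[Rplus/R0]_b F b) * c.
  by move=> F c; rewrite -bigR_mulr.
rewrite E1 E2 E3 E4.
move: L; clearbody sq; clearbody pb; clearbody p0 p1; rewrite !bigR_add !bigR_opp !e' !e; lra.
Qed.
End Ent4.
Lemma xln_le x y : 0 <= x -> 0 <= y -> x * ln (x + y) <= x * ln x + y.
Proof.
move=> [hx|<-] hy; last by lra.
have h := ln_le_sub1 (x := (x + y) / x) ltac:(apply: Rdiv_lt_0_compat; lra).
have hix : 0 < / x by apply: Rinv_0_lt_compat.
rewrite /Rdiv ln_mult ?ln_Rinv // in h; last lra.
have : x * (ln (x + y) + - ln x) <= x * ((x + y) * / x - 1) by apply: Rmult_le_compat_l; lra.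
have -> : x * ((x + y) * / x - 1) = y by field; lra.
lra.
Qed.

Lemma phi_subadd x y : 0 <= x -> 0 <= y -> phi (x + y) <= phi x + phi y.
Proof.
move=> hx hy; rewrite /phi.
case: hx => hx; last by rewrite -hx Rplus_0_l; lra.
case: hy => hy; last by rewrite -hy Rplus_0_r; lra.
have h1 := ln_le' hx (x := x) (y := x + y) ltac:(lra).
have h2 := ln_le' hy (x := y) (y := x + y) ltac:(lra).
have := Rmult_le_compat_l x _ _ (Rlt_le _ _ hx) h1.
have := Rmult_le_compat_l y _ _ (Rlt_le _ _ hy) h2.
have -> : (x + y) * ln (x + y) = x * ln (x + y) + y * ln (x + y) by ring.
lra.
Qed.

Lemma phi_lower x y : 0 <= x -> 0 <= y -> phi x - y * (x + y) <= phi (x + y).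
Proof.
move=> hx hy; rewrite /phi.
have h1 := xln_le hx hy.
have h2 : y * ln (x + y) <= y * (x + y - 1).
  case: hy => hy; last by rewrite -hy; lra.
  apply: Rmult_le_compat_l; first lra.
  apply: ln_le_sub1; lra.
have -> : (x + y) * ln (x + y) = x * ln (x + y) + y * ln (x + y) by ring.
lra.
Qed.

Section Cont.
Variable O : finType.

Lemma pmarg_add (a b : O -> R) (T : finType) (f : O -> T) t :
  pmarg (fun w => a w + b w) f t = pmarg a f t + pmarg b f t.
Proof. by rewrite /pmarg bigR_add. Qed.

Lemma ent_ext (a b : O -> R) (T : finType) (f : O -> T) :
  (forall w, a w = b w) -> ent a f = ent b f.
Proof.
move=> h; rewrite /ent /rsum; apply: eq_bigr => t _; rewrite /pmarg.
by rewrite (eq_bigr _ (fun w _ => h w)).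
Qed.

Variables (a b : O -> R).
Hypotheses (ha : forall w, 0 <= a w) (hb : forall w, 0 <= b w).

Lemma ent_add_le (T : finType) (f : O -> T) :
  ent (fun w => a w + b w) f <= ent a f + ent b f.
Proof.
rewrite /ent /rsum -bigR_add; apply: bigR_le => t _.
rewrite pmarg_add; apply: phi_subadd; exact: pmarg_ge0.
Qed.

Lemma ent_add_ge (T : finType) (f : O -> T) :
  (forall t, pmarg (fun w => a w + b w) f t <= 2) ->
  ent a f - 2 * rsum b <= ent (fun w => a w + b w) f.
Proof.
move=> h2; rewrite -(pmarg_sum b f) /ent /rsum.
have -> : forall (F G : T -> R), \big[Rplus/R0]_t F t - 2 * \big[Rplus/R0]_t G t
   = \big[Rplus/R0]_t (F t + - (2 * G t)).
  move=> F G; rewrite bigR_add bigR_opp Rmult_comm -bigR_mulr.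
  by rewrite /Rminus; congr (_ + - _); apply: eq_bigr => *; ring.
apply: bigR_le => t _.
have := h2 t; rewrite pmarg_add => ht.
have := phi_lower (pmarg_ge0 ha f t) (pmarg_ge0 hb f t).
have := pmarg_ge0 hb f t.
move: ht; set x := pmarg a f t; set y := pmarg b f t => ht hy.
have : y * (x + y) <= y * 2 by apply: Rmult_le_compat_l.
lra.
Qed.
End Cont.

Lemma ent_small (O T : finType) (b : O -> R) (f : O -> T) g :
  (forall w, 0 <= b w) -> 0 < g ->
  ent b f <= rsum b * (- ln g) + INR #|T| * g.
Proof.
move=> hb hg; rewrite -(pmarg_sum b f) -bigR_const /ent /rsum -bigR_mulr.
rewrite -bigR_add; apply: bigR_le => t _.
have h := gibbs_pt (pmarg_ge0 hb f t) (Rlt_le _ _ hg) (fun _ => hg).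
have := pmarg_ge0 hb f t. lra.
Qed.
Lemma set_ind_ord N (Pr : {set 'I_N} -> Prop) :
  Pr set0 ->
  (forall (j : 'I_N) (S : {set 'I_N}), (forall k, k \in S -> (k < j)%N) -> Pr S -> Pr (j |: S)) ->
  forall S, Pr S.
Proof.
move=> P0 PS S.
suff H : forall m, Pr [set k in S | (k < m)%N].
  have -> : S = [set k in S | (k < N)%N].
    by apply/setP => k; rewrite inE ltn_ord andbT.
  exact: H.
elim=> [|m IH].
  have -> : [set k in S | (k < 0)%N] = set0 by apply/setP => k; rewrite !inE ltn0 andbF.
  exact: P0.
case: (ltnP m N) => hm; last first.
  have -> : [set k in S | (k < m.+1)%N] = [set k in S | (k < m)%N].
    apply/setP => k; rewrite !inE; have := ltn_ord k => hk.
    have -> : (k < m.+1)%N by apply: ltn_trans (leq_trans hk hm) _.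
    by rewrite (leq_trans hk hm).
  exact: IH.
pose j := Ordinal hm.
case: (boolP (j \in S)) => hj.
  have -> : [set k in S | (k < m.+1)%N] = j |: [set k in S | (k < m)%N].
    apply/setP => k; rewrite !inE ltnS leq_eqVlt.
    case: (boolP (k == j)) => [/eqP -> | hkj] /=; first by rewrite hj eqxx.
    have -> : (nat_of_ord k == m) = false.
      by apply/negbTE; apply: contra hkj => /eqP e; apply/eqP/val_inj.
    by [].
  apply: PS => //; by move=> k; rewrite inE => /andP [].
have -> : [set k in S | (k < m.+1)%N] = [set k in S | (k < m)%N].
  apply/setP => k; rewrite !inE ltnS leq_eqVlt.
  case: (boolP (k \in S)) => hk //=.
  have -> : (nat_of_ord k == m) = false.
    apply/negbTE; apply: contra hj => /eqP e.
    by have -> : j = k by apply: val_inj.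
  by [].
exact: IH.
Qed.
Section Restr.
Variable O : finType.
Variable mu : O -> R.
Hypothesis hmu : forall w, 0 <= mu w.
Variable N : nat.
Variable tv : O -> 'rV['F_2]_N.

Lemma restr0 (t t' : 'rV['F_2]_N) : restr t set0 = restr t' set0.
Proof. by apply/ffunP => k; rewrite !ffunE inE. Qed.

Lemma restrU1_eq (t t' : 'rV['F_2]_N) j S :
  (restr t (j |: S) == restr t' (j |: S)) = (t ord0 j == t' ord0 j) && (restr t S == restr t' S).
Proof.
apply/eqP/andP => [e|[/eqP e1 /eqP e2]].
  split.
    by have := congr1 (fun f : {ffun 'I_N -> 'F_2} => f j) e; rewrite !ffunE setU11 => ->.
  apply/eqP/ffunP => k; rewrite !ffunE; case: ifP => hk //.
  by have := congr1 (fun f : {ffun 'I_N -> 'F_2} => f k) e; rewrite !ffunE in_setU1 hk orbT.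
apply/ffunP => k; rewrite !ffunE in_setU1; case: eqP => [->|_] //=.
by have := congr1 (fun f : {ffun 'I_N -> 'F_2} => f k) e2; rewrite !ffunE.
Qed.

Lemma ent_fext (T : finType) (f g : O -> T) : (forall w, f w = g w) -> ent mu f = ent mu g.
Proof. by move=> h; apply: ent_eqfib => w w'; rewrite !h. Qed.

Lemma ent_restr0 (TY : finType) (Y : O -> TY) :
  ent mu (fun w => (restr (tv w) set0, Y w)) = ent mu Y.
Proof.
apply: ent_eqfib => w w'; by rewrite xpair_eqE (restr0 (tv w) (tv w')) eqxx.
Qed.

Lemma notin_lt (j : 'I_N) (S : {set 'I_N}) :
  (forall k, k \in S -> (k < j)%N) -> j \notin S.
Proof. by move=> h; apply/negP => /h; rewrite ltnn. Qed.

Lemma ent_restrU1 (TY : finType) (Y : O -> TY) j S :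
  ent mu (fun w => (restr (tv w) (j |: S), Y w)) =
  ent mu (fun w => (tv w ord0 j, (restr (tv w) S, Y w))).
Proof.
apply: ent_eqfib => w w'; by rewrite !xpair_eqE restrU1_eq andbA.
Qed.

Lemma ent_restr_bin (TY : finType) (Y : O -> TY) S :
  ent mu (fun w => (restr (tv w) S, Y w)) <= ent mu Y + INR #|S| * (rsum mu * ln 2).
Proof.
move: S; apply: set_ind_ord.
  rewrite ent_restr0 cards0 /=; lra.
move=> j S hlt IH.
rewrite cardsU1 (notin_lt hlt) add1n S_INR ent_restrU1 Rmult_plus_distr_r Rmult_1_l.
apply: (Rle_trans _ _ _ (ent_bin hmu (fun w => tv w ord0 j) (fun w => (restr (tv w) S, Y w)))).
rewrite -Rplus_assoc; apply: Rplus_le_compat_r; exact: IH.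
Qed.

Lemma chain (TZ : finType) (Zf : O -> TZ) L (S : {set 'I_N}) :
  (forall i, i \in S -> L <= ent mu (fun w => (tv w ord0 i, (Defs.prefix (tv w) i, Zf w)))
                           - ent mu (fun w => (Defs.prefix (tv w) i, Zf w))) ->
  INR #|S| * L <= ent mu (fun w => (restr (tv w) S, Zf w)) - ent mu Zf.
Proof.
move: S; apply: set_ind_ord.
  move=> _; rewrite ent_restr0 cards0 /=; lra.
move=> j S hlt IH hS.
have IH' := IH (fun i hi => hS i (setU1r j hi)).
have hj := hS j (setU11 j S).
rewrite cardsU1 (notin_lt hlt) add1n S_INR ent_restrU1 Rmult_plus_distr_r Rmult_1_l.
have C := cond_mono hmu (fun w => tv w ord0 j) (fun w => (Defs.prefix (tv w) j, Zf w))
   (fun uz : {ffun 'I_N -> 'F_2} * TZ => ([ffun k => if k \in S then uz.1 k else 0%R], uz.2)).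
have e : forall w, ([ffun k => if k \in S then (Defs.prefix (tv w) j) k else 0%R], Zf w)
    = (restr (tv w) S, Zf w).
  move=> w; congr (_, _); apply/ffunP => k; rewrite !ffunE; case: ifP => hk //.
  by rewrite (hlt k hk).
rewrite /= (ent_fext (fun w => e w)) in C.
rewrite (ent_fext (f := fun w => (tv w ord0 j, _)) (fun w => congr1 (pair (tv w ord0 j)) (e w))) in C.
have C' : ent mu (fun w => (tv w ord0 j, (Defs.prefix (tv w) j, Zf w))) -
   ent mu (fun w => (Defs.prefix (tv w) j, Zf w)) <=
   ent mu (fun w => (tv w ord0 j, (restr (tv w) S, Zf w))) -
   ent mu (fun w => (restr (tv w) S, Zf w)) := C.
clear C; lra.
Qed.
End Restr.
Lemma ln2_pos : 0 < ln 2.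
Proof. have := ln_lt_2; lra. Qed.

Lemma minfo_ent (O TA TB : finType) (mu : O -> R) (hmu : forall w, 0 <= mu w)
  (A : O -> TA) (B : O -> TB) :
  minfo mu A B * ln 2 = ent mu A + ent mu B - ent mu (fun w => (A w, B w)).
Proof.
have l2 := ln2_pos.
transitivity (rsum (fun ab => pmarg mu (fun w => (A w, B w)) ab *
   (ln (pmarg mu (fun w => (A w, B w)) ab) - ln (pmarg mu A ab.1) - ln (pmarg mu B ab.2)))).
  rewrite /minfo /rsum -bigR_mulr; apply: eq_bigr => -[x y] _ /=.
  case: Rlt_dec => h.
    have ha : 0 < pmarg mu A x.
      apply: Rlt_le_trans h _; apply: (pmarg_le hmu) => w; by case=> ->.
    have hb : 0 < pmarg mu B y.
      apply: Rlt_le_trans h _; apply: (pmarg_le hmu) => w; by case=> _ ->.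
    have hab := Rmult_lt_0_compat _ _ ha hb.
    have hi := Rinv_0_lt_compat _ hab.
    rewrite /log2 /Rdiv ln_mult // ln_Rinv // ln_mult //= /is_left; field; lra.
  rewrite /= Rmult_0_l.
  have -> : pmarg mu (fun w => (A w, B w)) (x, y) = 0.
    have := pmarg_ge0 hmu (fun w => (A w, B w)) (x, y); lra.
  ring.
rewrite -(fiber mu (fun w => (A w, B w)) (fun ab =>
   ln (pmarg mu (fun w => (A w, B w)) ab) - ln (pmarg mu A ab.1) - ln (pmarg mu B ab.2))).
rewrite !entE /rsum /Rminus -!bigR_opp -!bigR_add; apply: eq_bigr => w _ /=; ring.
Qed.
Lemma INR_muln a b : INR (a * b)%N = INR a * INR b.
Proof. by rewrite mulnE mult_INR. Qed.

Lemma INR_expn a b : INR (a ^ b)%N = INR a ^ b.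
Proof. elim: b => [|b IH]; first by rewrite expn0. by rewrite expnS INR_muln IH /=; ring. Qed.

Lemma ent_unit (O : finType) (mu : O -> R) : ent mu (fun _ => tt) = phi (rsum mu).
Proof.
rewrite /ent /rsum (eq_bigr (fun _ => phi (pmarg mu (fun _ => tt) tt))); last by case.
have := bigR_const unit (phi (pmarg mu (fun _ => tt) tt)); rewrite /rsum => ->.
rewrite card_unit /= Rmult_1_l /pmarg; congr phi; apply: eq_bigl => w //.
Qed.

Lemma restr_split N (t t' : 'rV['F_2]_N) (I A : {set 'I_N}) : A \subset I ->
  (restr t (I :\: A) == restr t' (I :\: A)) && (restr t A == restr t' A) =
  (restr t I == restr t' I).
Proof.
move=> hAI; apply/andP/eqP => [[/eqP e1 /eqP e2]|e].
  apply/ffunP => k; rewrite !ffunE; case: ifP => hk //.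
  case: (boolP (k \in A)) => hka.
    by have := congr1 (fun f : {ffun 'I_N -> 'F_2} => f k) e2; rewrite !ffunE hka.
  by have := congr1 (fun f : {ffun 'I_N -> 'F_2} => f k) e1; rewrite !ffunE inE hka hk.
split; apply/eqP/ffunP => k; rewrite !ffunE; case: ifP => hk //.
  have hkI : k \in I by move: hk; rewrite inE => /andP [].
  by have := congr1 (fun f : {ffun 'I_N -> 'F_2} => f k) e; rewrite !ffunE hkI.
have hkI : k \in I by apply: (subsetP hAI).
by have := congr1 (fun f : {ffun 'I_N -> 'F_2} => f k) e; rewrite !ffunE hkI.
Qed.

Lemma abs_min x y : Rabs (x - y) = (x - Rmin x y) + (y - Rmin x y).
Proof.
rewrite /Rmin; case: Rle_dec => h.
  rewrite Rabs_left1; lra.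
rewrite Rabs_right; lra.
Qed.

Lemma final_arith N d K I l1 : 1 <= N -> 0 < d -> 0 <= K -> 0 <= I <= N ->
  0 <= l1 <= N * d ->
  I * (3 * N * d + 2 * d) + l1 * (N * K + 2) + 2 * d <= (9 + K) * N ^ 3 * d.
Proof.
move=> hN hd hK [hI0 hI] [hl0 hl].
have hN2 : N <= N * N by nra.
have hN3 : N * N <= N * N * N by nra.
have a1 : I * (3 * N * d + 2 * d) <= N * (3 * N * d + 2 * d) by apply: Rmult_le_compat_r; nra.
have a2 : l1 * (N * K + 2) <= N * d * (N * K + 2) by apply: Rmult_le_compat_r; nra.
have -> : N ^ 3 = N * N * N by ring.
have b1 : N * N * d <= N * N * N * d by nra.
have b2 : N * d <= N * N * N * d by nra.
have b3 : d <= N * N * N * d by nra.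
have b4 : N * N * K * d <= N * N * N * K * d.
  have : 0 <= K * d by nra.
  nra.
nra.
Qed.
Theorem lemma1 (beta : R) (hbeta : 0 < beta < 1 / 2) (k : nat) :
  exists C : R, exists n0 : nat,
  forall n : nat, (n0 <= n)%nat ->
  forall (X Z : finType), #|Z| = k ->
  forall p : 'F_2 * X * Z -> R, is_dist p ->
  forall Q : Omega n X Z -> R, is_dist Q ->
  l1dist (iid p) Q <= NN n * delta n beta ->
  forall I A : {set 'I_(2 ^ n)},
  I \subset Hset n p beta -> A \subset I ->
  minfo Q (fun w => restr (Tvec w) (I :\: A))
          (fun w => (restr (Tvec w) A, w.2))
    <= C * NN n ^ 3 * delta n beta.
Proof.
move: hbeta => [hb0 hb1].
pose K := ln (4 * INR k + 4).
have hk0 : 0 <= INR k by apply: pos_INR.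
have hK : 0 <= K.
  rewrite /K -ln_1; apply: ln_le'; lra.
have l2 := ln2_pos.
have l2' : ln 2 <= 1 by have := ln_le_sub1 (x := 2) ltac:(lra); lra.
exists ((9 + K) / ln 2), 0%N.
move=> n _ X Z hZ p hp Q [hQ0 hQ1] hl1 I A hIH hAI.
set Nn := (2 ^ n)%N.
set N := NN n.
set d := delta n beta.
have hN1 : 1 <= N.
  rewrite /N /NN; have h : (1 <= 2 ^ n)%N by rewrite expn_gt0.
  by have := le_INR _ _ (leP h).
have hd : 0 < d by rewrite /d /delta /Rpower; apply: exp_pos.
have hNb : Rpower N beta <= N.
  rewrite -{2}(Rpower_1 N); last lra.
  apply: Rle_Rpower; lra.
have lnd : ln d = - Rpower N beta * ln 2 by rewrite /d /delta ln_Rpower.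
apply: (Rmult_le_reg_r (ln 2)) => //.
have -> : (9 + K) / ln 2 * N ^ 3 * d * ln 2 = (9 + K) * N ^ 3 * d by field; lra.
pose P : Omega n X Z -> R := iid p.
have hP : forall w, 0 <= P w.
  move=> w; rewrite /P /iid; apply: big_ind; first lra.
    by move=> x y; apply: Rmult_le_pos.
  by move=> i _; apply: (proj1 hp).
pose Zf := fun w : Omega n X Z => w.2.
pose f1 := fun w : Omega n X Z => (restr (Tvec w) I, w.2).
have hIN : INR #|I| <= N.
  rewrite /N /NN; apply: le_INR; apply/leP.
  by have := max_card I; rewrite card_ord.
have BA : minfo Q (fun w => restr (Tvec w) (I :\: A)) (fun w => (restr (Tvec w) A, w.2)) * ln 2
          <= INR #|I| * ln 2 + ent Q Zf - ent Q f1.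
  rewrite (minfo_ent hQ0).
  have e1 : ent Q (fun w => (restr (Tvec w) (I :\: A), (restr (Tvec w) A, w.2))) = ent Q f1.
    apply: ent_eqfib => w w'; rewrite /f1 !xpair_eqE andbA.
    by rewrite (restr_split (Tvec w) (Tvec w') hAI).
  have e2 : ent Q (fun w => restr (Tvec w) (I :\: A)) <= INR #|I :\: A| * ln 2.
    have -> : ent Q (fun w => restr (Tvec w) (I :\: A)) =
              ent Q (fun w => (restr (Tvec w) (I :\: A), tt)).
      by apply: ent_eqfib => w w'; rewrite xpair_eqE eqxx andbT.
    apply: (Rle_trans _ _ _ (ent_restr_bin hQ0 (fun w => Tvec w) (fun _ => tt) (I :\: A))).
    rewrite ent_unit hQ1 /phi ln_1; lra.
  have e3 := ent_restr_bin hQ0 (fun w => Tvec w) Zf A.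
  rewrite hQ1 Rmult_1_l in e3.
  have cI : (#|I :\: A| + #|A|)%N = #|I|.
    by rewrite addnC -(cardsID A I) (setIidPr hAI).
  have cI' : INR #|I :\: A| + INR #|A| = INR #|I| by rewrite -plus_INR -addnE cI.
  rewrite e1.
  have e3' : ent Q (fun w => (restr (Tvec w) A, w.2)) <= ent Q Zf + INR #|A| * ln 2 := e3.
  have : INR #|I :\: A| * ln 2 + INR #|A| * ln 2 = INR #|I| * ln 2 by rewrite -cI'; ring.
  lra.
case: (Rle_lt_dec 1 (N * d)) => hNd.
  have c1 : ent Q Zf <= ent Q f1.
    apply: (ent_coarse hQ0) => w w'; rewrite /f1 /Zf => -[_ ->] //.
  have h1 : N <= N ^ 3 * d.
    have -> : N ^ 3 * d = N * N * (N * d) by ring.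
    have : N * N * 1 <= N * N * (N * d) by apply: Rmult_le_compat_l; nra.
    nra.
  have h2 : INR #|I| * ln 2 <= N * 1 :=
    Rmult_le_compat _ _ _ _ (pos_INR _) (Rlt_le _ _ l2) hIN l2'.
  have h3 : N ^ 3 * d <= (9 + K) * N ^ 3 * d.
    have h0 : 0 <= N ^ 3 * d by lra.
    have -> : (9 + K) * N ^ 3 * d = (9 + K) * (N ^ 3 * d) by ring.
    nra.
  apply: (Rle_trans _ _ _ BA); lra.
pose m := fun w => Rmin (P w) (Q w).
pose dp := fun w => P w - m w.
pose dq := fun w => Q w - m w.
have hm : forall w, 0 <= m w.
  by move=> w; rewrite /m /Rmin; case: Rle_dec => _; [apply: hP|apply: hQ0].
have hdp : forall w, 0 <= dp w by move=> w; rewrite /dp /m; have := Rmin_l (P w) (Q w); lra.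
have hdq : forall w, 0 <= dq w by move=> w; rewrite /dq /m; have := Rmin_r (P w) (Q w); lra.
have hsum : rsum dp + rsum dq = l1dist P Q.
  rewrite /l1dist /rsum -bigR_add; apply: eq_bigr => w _; by rewrite abs_min.
have hsp := bigR_ge0 (P := predT) (fun w (_ : predT w) => hdp w).
have hsq := bigR_ge0 (P := predT) (fun w (_ : predT w) => hdq w).
rewrite -/(rsum dp) in hsp; rewrite -/(rsum dq) in hsq.
have hPsum : rsum P = rsum m + rsum dp.
  by rewrite /rsum -bigR_add; apply: eq_bigr => w _; rewrite /dp; ring.
have hQsum : rsum Q = rsum m + rsum dq.
  by rewrite /rsum -bigR_add; apply: eq_bigr => w _; rewrite /dq; ring.
have hl1' : rsum dp + rsum dq <= N * d by rewrite hsum.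
pose Lc := ln 2 - 3 * (N * d) - 2 * d.
have CH : INR #|I| * Lc <= ent P f1 - ent P Zf.
  apply: (chain hP (tv := fun w => Tvec w)) => i hi.
  have hb := bhatt_ent hP (fun w => Tvec w ord0 i) (fun w => (Defs.prefix (Tvec w) i, w.2)).
  have hH : 1 - d <= bhatt P (fun w => Tvec w ord0 i) (fun w => (Defs.prefix (Tvec w) i, w.2)).
    have := subsetP hIH i hi; rewrite inE; by case: Rle_dec.
  apply: Rle_trans _ hb.
  have hs1 : rsum P - 1 <= N * d by lra.
  have hs2 : - (N * d) <= rsum P - 1 by lra.
  have hs3 : - (N * d) <= (rsum P - 1) * ln 2.
    case: (Rle_lt_dec 0 (rsum P - 1)) => h; first nra.
    nra.
  rewrite /Lc; lra.
have eQ : forall w, Q w = m w + dq w by move=> w; rewrite /dq; ring.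
have eP : forall w, P w = m w + dp w by move=> w; rewrite /dp; ring.
have pmQ : forall (T : finType) (f : Omega n X Z -> T) t,
    pmarg (fun w => m w + dq w) f t <= 2.
  move=> T f t; rewrite /pmarg -(eq_bigr _ (fun w _ => eQ w)).
  have := pmarg_le_sum hQ0 f t; rewrite /pmarg; lra.
have pmP : forall (T : finType) (f : Omega n X Z -> T) t,
    pmarg (fun w => m w + dp w) f t <= 2.
  move=> T f t; rewrite /pmarg -(eq_bigr _ (fun w _ => eP w)).
  have := pmarg_le_sum hP f t; rewrite /pmarg; lra.
have C1 : ent P f1 - ent dp f1 - 2 * rsum dq <= ent Q f1.
  rewrite (ent_ext f1 eQ) (ent_ext f1 eP).
  have := ent_add_ge hm hdq (pmQ _ f1).
  have := ent_add_le hm hdp f1.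
  lra.
have C2 : ent Q Zf <= ent P Zf + ent dq Zf + 2 * rsum dp.
  rewrite (ent_ext Zf eQ) (ent_ext Zf eP).
  have := ent_add_ge hm hdp (pmP _ Zf).
  have := ent_add_le hm hdq Zf.
  lra.
pose M := (2 * INR k + 2) ^ Nn.
have hM1 : 1 <= M.
  rewrite /M; have := pow_incr 1 (2 * INR k + 2) Nn ltac:(lra); rewrite pow1; lra.
pose g := d / M.
have hg : 0 < g by rewrite /g; apply: Rdiv_lt_0_compat; lra.
have hlng : - ln g <= N * K.
  rewrite /g /Rdiv ln_mult // ?ln_Rinv; try lra; last by apply: Rinv_0_lt_compat; lra.
  rewrite lnd /M ln_pow; last lra.
  have -> : K = ln 2 + ln (2 * INR k + 2).
    rewrite /K -ln_mult; try lra; congr ln; ring.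
  have : Rpower N beta * ln 2 <= N * ln 2 by apply: Rmult_le_compat_r; lra.
  have -> : INR Nn = N by [].
  lra.
have hcard1 : INR #|{: {ffun 'I_(2 ^ n) -> 'F_2} * 'rV[Z]_(2 ^ n)}| <= M.
  rewrite card_prod card_ffun card_mx !card_ord.
  have -> : (Zp_trunc (pdiv 2)).+2 = 2%N by [].
  rewrite hZ mul1n INR_muln !INR_expn.
  rewrite -Rpow_mult_distr /M; apply: pow_incr; simpl; lra.
have hcard2 : INR #|{: 'rV[Z]_(2 ^ n)}| <= M.
  rewrite card_mx hZ mul1n INR_expn /M; apply: pow_incr; lra.
have S1 := ent_small f1 hdp hg.
have S2 := ent_small Zf hdq hg.
have hgM : forall x, x <= M -> x * g <= d.
  move=> x hx; rewrite /g; apply: (Rmult_le_reg_r M); first lra.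
  have -> : x * (d / M) * M = x * d by field; lra.
  nra.
have E1 : ent dp f1 <= rsum dp * (N * K) + d.
  apply: (Rle_trans _ _ _ S1).
  apply: Rplus_le_compat; first exact: (Rmult_le_compat_l _ _ _ hsp hlng).
  exact: (hgM _ hcard1).
have E2 : ent dq Zf <= rsum dq * (N * K) + d.
  apply: (Rle_trans _ _ _ S2).
  apply: Rplus_le_compat; first exact: (Rmult_le_compat_l _ _ _ hsq hlng).
  exact: (hgM _ hcard2).
apply: (Rle_trans _ _ _ BA).
have FA := final_arith (K := K) (I := INR #|I|) hN1 hd hK (conj (pos_INR _) hIN)
   (conj (Rplus_le_le_0_compat _ _ hsp hsq) hl1').
have x1 : INR #|I| * ln 2 - INR #|I| * Lc = INR #|I| * (3 * N * d + 2 * d) by rewrite /Lc; ring.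
have x2 : (rsum dp + rsum dq) * (N * K + 2) =
   rsum dp * (N * K) + rsum dq * (N * K) + 2 * rsum dp + 2 * rsum dq by ring.
lra.
Qed.
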